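(* Let $G$ be a finite group, let $p$ be a prime, and let $A$ be a subgroup of $G$ of maximum order among the self-centralizing subgroups of $G$ (subgroups $B$ with $C_G(B)=B$). \begin{enumerate} \item If $|G:A|=p$ and $|G:Z(G)|=p^i$ with $i>2$, then $A$ is the unique self-centralizing subgroup of $G$ of maximum order. The same conclusion holds if $p$ is the smallest prime divisor of $|G|$, $|G:A|=p$ and $|G:Z(G)|>p^2$. \item If $|G:A|=p^2$, $|G:Z(G)|=p^i$ with $i>4$, and $G$ possesses a subgroup $T$ of index $p$ in $G$ whose center has index $p^3$ in $G$, then $T$ is the unique subgroup of $G$ of index $p$ whose center has index $p^3$ in $G$. The same conclusion holds if $p$ is the smallest prime divisor of $|G|$, $|G:A|=p^2$, $|G:Z(G)|>p^4$, and $G$ possesses such a subgroup $T$. \item If $|G:A|=p^2$, $|G:Z(G)|=p^i$ with $i>4$, and $G$ does not possess a subgroup of index $p$ in $G$ whose center has index $p^3$ in $G$, then $A$ is the unique self-centralizing subgroup of $G$ of maximum order. The same conclusion holds if $p$ is the smallest prime divisor of $|G|$, $|G:A|=p^2$, $|G:Z(G)|>p^4$, and $G$ does not possess such a subgroup. \end{enumerate} *)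

(* Defs.v *)
From mathcomp Require Import all_boot all_fingroup all_solvable.
Set Implicit Arguments. Unset Strict Implicit. Unset Printing Implicit Defensive.
Local Open Scope group_scope.

Definition self_centralizing (gT : finGroupType) (G B : {group gT}) : Prop :=
  B \subset G /\ 'C_G(B) = B.

Definition max_self_centralizing (gT : finGroupType) (G A : {group gT}) : Prop :=
  self_centralizing G A /\
  forall B : {group gT}, self_centralizing G B -> (#|B| <= #|A|)%N.

Definition unique_max_self_centralizing (gT : finGroupType) (G A : {group gT}) : Prop :=
  max_self_centralizing G A /\
  forall B : {group gT}, max_self_centralizing G B -> B = A.

Definition index_p_center_p3 (gT : finGroupType) (G : {group gT}) (p : nat)
  (T : {group gT}) : Prop :=
  T \subset G /\ (#|G : T| = p)%N /\ (#|G : 'Z(T)| = p ^ 3)%N.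

(* Main.v *)
Require Import Defs.
From mathcomp Require Import all_boot all_fingroup all_solvable.
From mathcomp Require Import zify ssralg ring.
Local Open Scope group_scope.

Set Implicit Arguments. Unset Strict Implicit.

Section Aux.
Variable gT : finGroupType.
Implicit Types G A B X Y K : {group gT}.

Lemma cnt X Y K : X \subset K -> Y \subset K ->
  (#|X| * #|Y| <= #|K| * #|X :&: Y|)%N.
Proof.
move=> sXK sYK; rewrite mul_cardG leq_mul2r subset_leq_card ?orbT //.
by rewrite mulG_subG sXK.
Qed.

Lemma sc_abelian G B : self_centralizing G B -> abelian B.
Proof. by case=> _ E; rewrite /abelian -{1}E subsetIr. Qed.

Lemma sc_Z G B : self_centralizing G B -> 'Z(G) \subset B.
Proof. by case=> sBG E; rewrite -E /center setIS // centS. Qed.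

Lemma abelian_le G A X : max_self_centralizing G A -> X \subset G -> abelian X ->
  (#|X| <= #|A|)%N.
Proof.
move=> [_ mx] sXG aX.
pose gP := fun H : {group gT} => (H \subset G) && abelian H.
have gPX : gP X by rewrite /gP sXG aX.
have [M /maxgroupP [/andP [sMG aM] maxM] sXM] := maxgroup_exists gPX.
apply: leq_trans (subset_leq_card sXM) (mx M _).
split=> //; apply/eqP; rewrite eqEsubset subsetI sMG (aM : M \subset 'C(M)) !andbT.
apply/subsetP=> x /setIP [xG xC].
have sxC : <[x]> \subset 'C(M) by rewrite cycle_subG.
have eq : M <*> <[x]> = M :> {set gT}.
  have := maxM (M <*> <[x]>)%G; rewrite /gP /= join_subG sMG cycle_subG xG.
  rewrite abelianY aM cycle_abelian sxC joing_subl => h.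
  by rewrite (h isT isT).
by rewrite -eq; apply: (subsetP (joing_subr _ _)); apply: cycle_id.
Qed.

Lemma maxl G X Y p : prime p -> X \subset G -> #|G : X| = p -> Y \subset G ->
  ~~ (Y \subset X) -> X <*> Y = G.
Proof.
move=> pp sXG iX sYG nYX.
have sHG : X <*> Y \subset G by rewrite join_subG sXG.
have := Lagrange_index sHG (joing_subl X Y); rewrite iX => e.
have : #|X <*> Y : X| != 1%N.
  apply/negP => /eqP /(index1g (joing_subl X Y)) h.
  by move: nYX; rewrite h /= joing_subr.
move=> h1; apply: index1g sHG _.
have := pp => /primeP [p1 /(_ #|G : X <*> Y|)].
rewrite -e dvdn_mulr // => /(_ isT) /orP [/eqP //| /eqP h2].
have := indexg_gt0 G (X <*> Y); move: h1 h2; set a := #|G : _|; set b := #|_ : X|. move=> h1 h2 h3; by move: h1; rewrite -(eqn_pmul2l h3) muln1 -h2 eqxx.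
Qed.

Lemma centerC G : 'Z(G) \subset 'C(G).
Proof. exact: subsetIr. Qed.

Lemma part1 G A B p : prime p -> max_self_centralizing G A ->
  max_self_centralizing G B -> #|G : A| = p -> (p ^ 2 < #|G : 'Z(G)|)%N -> B = A.
Proof.
move=> pp [scA mA] [scB mB] iA lt.
have [sAG cA] := scA; have [sBG cB] := scB.
have eAB : #|B| = #|A| by apply/eqP; rewrite eqn_leq mA // mB.
case: (boolP (B \subset A)) => [sBA | nBA].
  by apply: group_inj; apply/eqP; rewrite eqEcard sBA eAB leqnn.
have jG := maxl pp sAG iA sBG nBA.
have sZ : A :&: B \subset 'Z(G).
  rewrite /center subsetI (subset_trans (subsetIl _ _) sAG) -jG centY subsetI.
  rewrite (subset_trans (subsetIl _ _) (sc_abelian scA)).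
  by rewrite (subset_trans (subsetIr _ _) (sc_abelian scB)).
have c := cnt sAG sBG. have z := subset_leq_card sZ.
have l1 := Lagrange sAG. have l2 := Lagrange (center_sub G).
have a0 : (0 < #|A|)%N := cardG_gt0 A.
have p0 : (0 < p)%N := prime_gt0 pp.
move: c z l1 l2 a0 p0 lt; rewrite iA eAB.
set a := #|A|; set g := #|G|; set w := #|_ :&: _|; set z := #|'Z(G)|; set I := #|G : _|.
move=> c z' l1 l2 a0 p0 lt.
have h1 : (a * a <= a * p * z)%N by rewrite l1; apply: leq_trans c _; rewrite leq_mul2l z' orbT.
have h2 : (a <= p * z)%N by move: h1; rewrite -mulnA leq_pmul2l.
have h3 : (g <= p ^ 2 * z)%N by rewrite -l1 mulnC expnS -mulnA leq_pmul2l.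
move: h3; rewrite -l2 mulnC leq_pmul2r ?cardG_gt0 //.
by rewrite leqNgt lt.
Qed.

Lemma p2case G T T' p : prime p -> index_p_center_p3 G p T ->
  index_p_center_p3 G p T' -> ~~ ('Z(T) \subset T') -> (#|G : 'Z(G)| <= p ^ 4)%N.
Proof.
move=> pp [sTG [iT iZT]] [sT'G [iT' iZT']] nZ.
have sZTG : 'Z(T) \subset G := subset_trans (center_sub T) sTG.
have sZT'G : 'Z(T') \subset G := subset_trans (center_sub T') sT'G.
have jG := maxl pp sT'G iT' sZTG nZ.
have sD : 'Z(T') :&: T \subset 'Z(G).
  rewrite /center subsetI (subset_trans (subsetIr _ _) sTG) -jG centY subsetI.
  rewrite (subset_trans (subsetIl _ _) (centerC T')).
  by rewrite (subset_trans (subsetIr _ _)) // centsC centerC.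
have c := cnt sZT'G sTG. have z := subset_leq_card sD.
have l1 := Lagrange sZT'G. have l2 := Lagrange (center_sub G).
have l3 := Lagrange sTG.
have p0 : (0 < p)%N := prime_gt0 pp.
have g0 : (0 < #|G|)%N := cardG_gt0 G.
have z0 : (0 < #|'Z(G)|)%N := cardG_gt0 _.
move: c z l1 l2 l3 p0 g0 z0; rewrite iT iZT'.
set zt := #|'Z(T')|; set t := #|T|; set g := #|G|; set w := #|_ :&: _|; set z := #|'Z(G)|; set I := #|G : _|.
move=> c z' l1 l2 l3 p0 g0 z0.
have h1 : (zt * t <= g * z)%N by apply: leq_trans c _; rewrite leq_mul2l z' orbT.
have h2 : (g * g <= g * (z * p ^ 4))%N.
  have e1 : ((zt * t) * p ^ 4 = g * g)%N.
    by rewrite -{1}l1 -l3; ring.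
  by rewrite -e1 mulnA leq_mul2r h1 orbT.
move: h2; rewrite leq_pmul2l // -l2 leq_pmul2l //.
Qed.

Lemma part2 G A T T' p : prime p -> max_self_centralizing G A ->
  #|G : A| = (p ^ 2)%N -> (p ^ 4 < #|G : 'Z(G)|)%N ->
  index_p_center_p3 G p T -> index_p_center_p3 G p T' -> T' = T.
Proof.
move=> pp mA iA lt hT hT'.
case: (boolP ('Z(T) \subset T')) => [s1|n1]; last first.
  by move: (p2case pp hT hT' n1); rewrite leqNgt lt.
case: (boolP ('Z(T') \subset T)) => [s2|n2]; last first.
  by move: (p2case pp hT' hT n2); rewrite leqNgt lt.
have [sTG [iT iZT]] := hT; have [sT'G [iT' iZT']] := hT'.
have p0 : (0 < p)%N := prime_gt0 pp.
have eT : #|T'| = #|T|.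
  by apply/eqP; rewrite -(eqn_pmul2r p0) -{1}iT' -{1}iT !Lagrange.
case: (boolP (T' \subset T)) => [sT'T | nT'T].
  by apply: group_inj; apply/eqP; rewrite eqEcard sT'T eT leqnn.
have jG := maxl pp sTG iT sT'G nT'T.
have sZTG : 'Z(T) \subset G := subset_trans (center_sub T) sTG.
have sZT'G : 'Z(T') \subset G := subset_trans (center_sub T') sT'G.
pose K := ('Z(T) <*> 'Z(T'))%G.
have sKG : K \subset G by rewrite join_subG sZTG.
have aK : abelian K.
  rewrite abelianY !center_abelian /=.
  by rewrite (subset_trans s2) // centsC centerC.
have kA := abelian_le mA sKG aK.
have sD : 'Z(T) :&: 'Z(T') \subset 'Z(G).
  rewrite /center subsetI (subset_trans (subsetIl _ _) sZTG) -jG centY subsetI.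
  rewrite (subset_trans (subsetIl _ _) (centerC T)).
  by rewrite (subset_trans (subsetIr _ _) (centerC T')).
have c := cnt (joing_subl 'Z(T) 'Z(T')) (joing_subr 'Z(T) 'Z(T')).
have z := subset_leq_card sD.
have l1 := Lagrange sZTG. have l1' := Lagrange sZT'G.
have l2 := Lagrange (center_sub G).
have l3 := Lagrange (proj1 mA).1.
have g0 : (0 < #|G|)%N := cardG_gt0 G.
have z0 : (0 < #|'Z(G)|)%N := cardG_gt0 _.
move: c z l1 l1' l2 l3 p0 g0 z0 kA; rewrite iA iZT iZT' -/K.
set zt := #|'Z(T)|; set zt' := #|'Z(T')|; set k := #|gval K|; set a := #|A|; set g := #|G|; set w := #|_ :&: _|; set z := #|'Z(G)|; set I := #|G : _|.
move=> c z' l1 l1' l2 l3 p0 g0 z0 kA.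
have h1 : (zt * zt' <= a * z)%N.
  apply: leq_trans c _; apply: leq_mul => //.
have h2 : (g * g <= g * (z * p ^ 4))%N.
  have e1 : ((zt * zt') * p ^ 6 = g * g)%N.
    by rewrite -{1}l1 -l1'; ring.
  have e2 : ((a * z) * p ^ 6 = g * (z * p ^ 4))%N.
    by rewrite -l3; ring.
  by rewrite -e1 -e2 leq_mul2r h1 orbT.
by move: h2; rewrite leq_pmul2l // -l2 leq_pmul2l // leqNgt lt.
Qed.

Lemma sq p m n : prime p -> (m * n = p ^ 2)%N -> m != 1%N -> n != 1%N -> m = p /\ n = p.
Proof.
move=> pp e m1 n1.
have p0 : (0 < p)%N := prime_gt0 pp.
have : (m %| p ^ 2)%N by rewrite -e dvdn_mulr.
case/(dvdn_pfactor _ _ pp) => k; case: k => [|[|[|k]]] // _ em; subst m.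
- by rewrite expn0 in m1.
- split; first by rewrite expn1.
  by move: e; rewrite expn1 => e; apply/eqP; rewrite -(eqn_pmul2l p0) e mulnn.
- move: e n1; rewrite -{2}(muln1 (p ^ 2)%N) => /eqP; rewrite eqn_pmul2l ?expn_gt0 ?p0 //.
  by move=> /eqP ->.
Qed.

Lemma part3 G A B p : prime p -> max_self_centralizing G A ->
  max_self_centralizing G B -> #|G : A| = (p ^ 2)%N -> (p ^ 4 < #|G : 'Z(G)|)%N ->
  (forall k, 1 < k -> k %| #|G : 'Z(G)| -> p <= k)%N ->
  (~ exists T : {group gT}, index_p_center_p3 G p T) -> B = A.
Proof.
move=> pp mA' [scB mB] iA lt hk nT.
have [scA mA] := mA'.
have [sAG cA] := scA; have [sBG cB] := scB.
have eAB : #|B| = #|A| by apply/eqP; rewrite eqn_leq mA // mB.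
have p0 : (0 < p)%N := prime_gt0 pp.
have a0 : (0 < #|A|)%N := cardG_gt0 A.
case: (boolP (B \subset A)) => [sBA | nBA].
  by apply: group_inj; apply/eqP; rewrite eqEcard sBA eAB leqnn.
pose H := (A <*> B)%G.
have sAH : A \subset H := joing_subl A B.
have sBH : B \subset H := joing_subr A B.
have sHG : H \subset G by rewrite join_subG sAG.
have cH : 'C(H) = 'C(A) :&: 'C(B) by rewrite centY.
have sIH : A :&: B \subset 'C(H).
  rewrite cH subsetI (subset_trans (subsetIl _ _) (sc_abelian scA)).
  by rewrite (subset_trans (subsetIr _ _) (sc_abelian scB)).
have c := cnt sAH sBH.
case: (eqVneq (gval H) (gval G)) => [eHG | nHG].
  have sZ : A :&: B \subset 'Z(G).
    by rewrite /center subsetI (subset_trans (subsetIl _ _) sAG) -eHG sIH.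
  have z := subset_leq_card sZ.
  have l1 := Lagrange sAG. have l2 := Lagrange (center_sub G).
  move: c z l1 l2 lt; rewrite iA eAB eHG.
  set a := #|A|; set g := #|G|; set w := #|_ :&: _|; set z := #|'Z(G)|; set I := #|G : _|.
  move=> c z' l1 l2 lt.
  have h1 : (a * a <= a * (p ^ 2 * z))%N.
    by rewrite mulnA l1; apply: leq_trans c _; rewrite leq_mul2l z' orbT.
  have h2 : (a <= p ^ 2 * z)%N by move: h1; rewrite leq_pmul2l.
  have h3 : (g <= p ^ 4 * z)%N.
    rewrite -l1 mulnC (_ : p ^ 4 = p ^ 2 * p ^ 2)%N ?(expnD p 2 2) // -mulnA leq_pmul2l //.
    by rewrite expn_gt0 p0.
  move: h3; rewrite -l2 mulnC leq_pmul2r ?cardG_gt0 //.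
  by rewrite leqNgt lt.
have li := Lagrange_index sHG sAH.
have [iH iHA] : #|G : H| = p /\ #|H : A| = p.
  apply: sq => //; first by rewrite li iA.
    by apply/negP => /eqP /(index1g sHG) /eqP; rewrite (negbTE nHG).
  apply/negP => /eqP /(index1g sAH) eAH.
  by move: nBA; rewrite eAH sBH.
have sZHA : 'Z(H) \subset A.
  by rewrite -cA /center setISS // centS.
have sIZ : A :&: B \subset 'Z(H).
  by rewrite /center subsetI (subset_trans (subsetIl _ _) sAH) sIH.
have sZGZH : 'Z(G) \subset 'Z(H).
  rewrite /center subsetI (subset_trans (sc_Z scA) sAH).
  exact: subset_trans (centerC G) (centS sHG).
have sZHG : 'Z(H) \subset G := subset_trans sZHA sAG.
have lH := Lagrange sAH.
have lZ := Lagrange sZHA.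
have lGZ := Lagrange_index sAG sZHA.
have lI := Lagrange_index sZHG sZGZH.
have z := subset_leq_card sIZ.
have k1 : #|A : 'Z(H)| != 1%N.
  apply/negP => /eqP /(index1g sZHA) eZA.
  have aH : abelian H.
    rewrite abelianY (sc_abelian scA) (sc_abelian scB) /=.
    rewrite centsC -eZA; exact: subset_trans (centerC H) (centS sBH).
  have := abelian_le mA' sHG aH.
  rewrite -lH iHA leqNgt -{1}(muln1 #|A|) ltn_pmul2l //.
  by rewrite prime_gt1.
have kp : (#|A : 'Z(H)| <= p)%N.
  move: c z lH lZ; rewrite iHA eAB.
  set a := #|A|; set h := #|gval H|; set w := #|_ :&: _|; set zh := #|'Z(H)|; set k := #|A : _|.
  move=> c z' lH lZ.
  have h1 : (a * a <= a * (p * zh))%N.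
    by rewrite mulnA lH; apply: leq_trans c _; rewrite leq_mul2l z' orbT.
  move: h1; rewrite leq_pmul2l // -lZ mulnC leq_pmul2r //.
  by rewrite cardG_gt0.
have kge : (p <= #|A : 'Z(H)|)%N.
  apply: hk; first by rewrite ltn_neqAle eq_sym k1 indexg_gt0.
  by rewrite -lI -lGZ dvdn_mulr // dvdn_mull.
apply: False_ind; apply: nT; exists H; split=> //; split=> //.
rewrite -lGZ iA (_ : #|A : 'Z(H)| = p); first by rewrite -expnSr.
by apply/eqP; rewrite eqn_leq kp kge.
Qed.
End Aux.

Theorem corollary2p2 (gT : finGroupType) (G A : {group gT}) (p : nat) :
  prime p -> max_self_centralizing G A ->
  (* (1) *)
  (((#|G : A| = p)%N -> (exists i, (#|G : 'Z(G)| = p ^ i)%N /\ (2 < i)%N) ->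
      unique_max_self_centralizing G A) /\
   ((p = pdiv #|G|)%N -> (#|G : A| = p)%N -> (p ^ 2 < #|G : 'Z(G)|)%N ->
      unique_max_self_centralizing G A)) /\
  (* (2) *)
  ((forall T : {group gT},
      (#|G : A| = p ^ 2)%N -> (exists i, (#|G : 'Z(G)| = p ^ i)%N /\ (4 < i)%N) ->
      index_p_center_p3 G p T ->
      forall T' : {group gT}, index_p_center_p3 G p T' -> T' = T) /\
   (forall T : {group gT},
      (p = pdiv #|G|)%N -> (#|G : A| = p ^ 2)%N -> (p ^ 4 < #|G : 'Z(G)|)%N ->
      index_p_center_p3 G p T ->
      forall T' : {group gT}, index_p_center_p3 G p T' -> T' = T)) /\
  (* (3) *)
  (((#|G : A| = p ^ 2)%N -> (exists i, (#|G : 'Z(G)| = p ^ i)%N /\ (4 < i)%N) ->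
      (~ exists T : {group gT}, index_p_center_p3 G p T) ->
      unique_max_self_centralizing G A) /\
   ((p = pdiv #|G|)%N -> (#|G : A| = p ^ 2)%N -> (p ^ 4 < #|G : 'Z(G)|)%N ->
      (~ exists T : {group gT}, index_p_center_p3 G p T) ->
      unique_max_self_centralizing G A)).
Proof.
move=> pp mA.
have p1 := prime_gt1 pp.
have hki : forall i, #|G : 'Z(G)| = (p ^ i)%N ->
    (forall k, 1 < k -> k %| #|G : 'Z(G)| -> p <= k)%N.
  move=> i -> k k1 /(dvdn_pfactor _ _ pp) [m _ em]; subst k.
  case: m k1 => [|m] //; rewrite expnS => _.
  by rewrite leq_pmulr // expn_gt0 ltnW.
have hkd : (p = pdiv #|G|)%N ->
    (forall k, 1 < k -> k %| #|G : 'Z(G)| -> p <= k)%N.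
  move=> -> k k1 kI; apply: pdiv_min_dvd k1 _.
  exact: dvdn_trans kI (dvdn_indexg _ _).
have lti : forall i j, #|G : 'Z(G)| = (p ^ i)%N -> (j < i)%N -> (p ^ j < #|G : 'Z(G)|)%N.
  by move=> i j -> ji; rewrite ltn_exp2l.
split; [split|split; [split|split]].
- move=> iA [i [eI li]]; split=> // B mB.
  exact: part1 pp mA mB iA (lti _ _ eI li).
- move=> _ iA lt; split=> // B mB; exact: part1 pp mA mB iA lt.
- move=> T iA [i [eI li]] hT T' hT'; exact: part2 pp mA iA (lti _ _ eI li) hT hT'.
- move=> T _ iA lt hT T' hT'; exact: part2 pp mA iA lt hT hT'.
- move=> iA [i [eI li]] nT; split=> // B mB.
  exact: part3 pp mA mB iA (lti _ _ eI li) (hki _ eI) nT.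
- move=> pd iA lt nT; split=> // B mB.
  exact: part3 pp mA mB iA lt (hkd pd) nT.
Qed.
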